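(* Let $m=(m_\lambda)_{\lambda\in\Lambda}$ be a formal tuple with $m_\lambda=G_0^\lambda+YG_1^\lambda$, where $G_0^\lambda,G_1^\lambda\in K[[s_\lambda]]$ for $\lambda\in\Lambda_0$ and $G_0^\infty,G_1^\infty\in s_\infty K[[s_\infty]]$, and suppose that for every $\lambda\in\Lambda$ $$\partial_tG_0^\lambda=0,\qquad \partial_tG_1^\lambda+\phi_\lambda(h)\,G_1^\lambda=\sum_{\lambda'\in\Lambda}\phi_\lambda\Big(\Pr_{\lambda'}\big(\phi_{\lambda'}(h)G_1^{\lambda'}\big)\Big)$$ (the formal version of the equation $\nabla_c(m)=0$; the right-hand side only involves the constant terms $G_1^{\lambda_i}(0)$, since $h$ has simple poles at the $\lambda_i$ and vanishes at $\infty$). Then $m\in M_c$, i.e. every $G_j^\lambda$ converges on the open unit disc $|s_\lambda|<1$; hence $m\in H$.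
   Context: Standing setup. Let $k$ be a finite field of odd characteristic $p$, $W(k)$ its ring of Witt vectors, $K$ the fraction field of $W(k)$, $|\cdot|$ the $p$-adic absolute value. Let $g\ge1$ and let $\lambda_1,\dots,\lambda_{2g+1}\in W(k)$ have pairwise distinct reductions modulo $p$. Put $Q(t)=\prod_{i=1}^{2g+1}(t-\lambda_i)$ and $h(t)=\frac{Q'(t)}{2Q(t)}$. Let $\Lambda=\{\lambda_1,\dots,\lambda_{2g+1},\infty\}$, $\Lambda_0=\Lambda\setminus\{\infty\}$. The local parameter at $\lambda\in\Lambda_0$ is $s_\lambda=t-\lambda$, and at $\infty$ it is $s_\infty=t^{-1}$; $\partial_t$ acts on series in $s_\lambda$ ($\lambda$ finite) as $d/ds_\lambda$ and on series in $s_\infty$ as $-s_\infty^2\,d/ds_\infty$. Let $B_K^\dagger$ be the ring of series $\sum_{\underline\ell\ge0}a_{\underline\ell}\,t^{\ell_0}\prod_{i}(t-\lambda_i)^{-\ell_i}$ ($a_{\underline\ell}\in K$) for which there is $\eta>1$ with $|a_{\underline\ell}|\eta^{\max_i\ell_i}\to0$; $\phi_\lambda(f)$ is the Laurent expansion of $f\in B_K^\dagger$ in $s_\lambda$. The principal part is $\Pr_\lambda(\sum a_\ell s_\lambda^\ell)=\sum_{\ell<0}a_\ell s_\lambda^\ell$ for $\lambda\in\Lambda_0$ and $\Pr_\infty(\sum a_\ell s_\infty^\ell)=\sum_{\ell\le0}a_\ell s_\infty^\ell$; its expansion at another point $\mu$ is denoted $\phi_\mu(\cdot)$ (and $\phi_\lambda(\Pr_\lambda(F))=\Pr_\lambda(F)$).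 For $\lambda\in\Lambda_0$, $\tilde R_{\lambda,c}$ is the space of $\sum_{\ell\ge0}a_\ell s_\lambda^\ell$ with $|a_\ell|\eta^\ell\to0$ for all $\eta<1$, and $R_{\infty,c}$ the analogous space of $\sum_{\ell\ge1}a_\ell s_\infty^\ell$. $B_c=\prod_{\lambda\in\Lambda_0}\tilde R_{\lambda,c}\times R_{\infty,c}$ is a $B_K^\dagger$-module via $(f\cdot G)^\mu=\phi_\mu(f)G^\mu-\sum_{\lambda\in\Lambda}\phi_\mu\big(\Pr_\lambda(\phi_\lambda(f)G^\lambda)\big)$. Let $A_K^\dagger=B_K^\dagger\oplus B_K^\dagger Y$ with $Y^2=Q(t)$, $\nabla_{GM}(1)=0$, $\nabla_{GM}(Y)=hY$; $M_c=A_K^\dagger\otimes_{B_K^\dagger}B_c$ with elements $m_c=1\otimes G_0+Y\otimes G_1$ ($G_0,G_1\in B_c$) and $\nabla_c(m_c)=1\otimes\partial_tG_0+Y\otimes(\partial_tG_1+h\cdot G_1)$. $H=\ker\nabla_c$ (the space $H^1_{MW,c}(V,\pi_*A_K^\dagger)$). *)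

(* Defs.v *)
From HB Require Import structures.
From mathcomp Require Import all_boot all_order all_algebra.
Set Implicit Arguments. Unset Strict Implicit. Unset Printing Implicit Defensive.
Import Order.TTheory GRing.Theory Num.Theory.
Local Open Scope ring_scope.

Section Defs.
Variable K : fieldType.

(* v is the normalized discrete valuation on K^x (v p = 1); |x| = p^{-v x}.
   vge v x N  <->  |x| <= p^{-N}  (x = 0 allowed). *)
Definition vge (v : K -> int) (x : K) (N : int) : Prop := x = 0 \/ N <= v x.

(* K is a complete discretely valued field of characteristic 0, with
   normalized valuation v, v(p) = 1 (absolutely unramified) and finite
   residue field (of characteristic p, p an odd prime).  By Cohen's
   structure theorem such a K is exactly Frac W(k), k a finite field of
   odd characteristic p, with its p-adic valuation. *)
Definition Witt_frac_field (p : nat) (v : K -> int) : Prop :=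
  [/\ prime p /\ (2 < p)%N,
      (forall n : nat, (n.+1)%:R != 0 :> K),
      (forall x y : K, x != 0 -> y != 0 -> v (x * y) = v x + v y)
        /\ (forall x y : K, x != 0 -> y != 0 -> x + y != 0 ->
              Num.min (v x) (v y) <= v (x + y))
        /\ v (p%:R) = 1,
      (forall u : nat -> K,
        (forall N : int, exists M : nat, forall m n : nat,
            (M <= m)%N -> (M <= n)%N -> vge v (u m - u n) N) ->
        exists l : K, forall N : int, exists M : nat, forall n : nat,
            (M <= n)%N -> vge v (u n - l) N)
    & (* finite residue field *)
      (exists s : seq K, (forall r, r \in s -> vge v r 0) /\
         forall x : K, vge v x 0 -> exists2 r, r \in s & vge v (x - r) 1)].

(* Convergence on the open unit disc of sum_l a_l s^l:
   |a_l| eta^l -> 0 for every eta < 1.  Writing eta = p^{-c}, c > 0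
   (rational c suffice by monotonicity), this says
   v(a_l) + c*l -> +oo. *)
Definition conv_open_disc (v : K -> int) (a : nat -> K) : Prop :=
  forall c : rat, 0 < c -> forall N : int, exists L : nat, forall l : nat,
    (L <= l)%N -> a l = 0 \/ (N%:~R <= (v (a l))%:~R + c * l%:R :> rat).

Definition ps_mul (f g : nat -> K) : nat -> K :=
  fun n => \sum_(i < n.+1) f i * g (n - i)%N.

Fixpoint ps_inv_seq (u : nat -> K) (n : nat) : seq K :=
  match n with
  | 0 => [:: (u 0%N)^-1]
  | m.+1 => let s := ps_inv_seq u m in
            rcons s (- (u 0%N)^-1 * \sum_(k < m.+1) u k.+1 * nth 0 s (m - k)%N)
  end.
Definition ps_inv (u : nat -> K) : nat -> K := fun n => nth 0 (ps_inv_seq u n) n.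

(* a Laurent series (n, f) stands for s^{-n} * sum_k f_k s^k *)
Definition laurent := (nat * (nat -> K))%type.
Definition lcoef (L : laurent) (j : int) : K :=
  match (j + (L.1)%:Z)%R with Posz k => L.2 k | Negz _ => 0 end.
Definition lmul_ps (L : laurent) (g : nat -> K) : laurent := (L.1, ps_mul L.2 g).
Definition ps_laurent (f : nat -> K) : laurent := (0%N, f).

(* a point is Some i (the point lam i, parameter s = t - lam i) or None (oo,
   parameter s = 1/t). *)
Variable N : nat.
Variable lam : 'I_N -> K.

Definition expand_fin (a : K) (P R : {poly K}) : laurent :=
  let P' := P \Po ('X + a%:P) in
  let R' := R \Po ('X + a%:P) in
  let m := find (fun c => c != 0) R' in
  (m, ps_mul (fun k => P'`_k) (ps_inv (fun k => R'`_(k + m)))).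

(* Laurent expansion at oo (in s = 1/t) of P/R (R != 0):
   P(1/s)/R(1/s) = s^{deg R - deg P} revP(s)/revR(s). *)
Definition rev_coef (P : {poly K}) (k : nat) : K :=
  if (k <= (size P).-1)%N then P`_((size P).-1 - k) else 0.
Definition expand_inf (P R : {poly K}) : laurent :=
  let dP := (size P).-1 in let dR := (size R).-1 in
  (dP, fun k => if (dR <= k)%N
                then ps_mul (rev_coef P) (ps_inv (rev_coef R)) (k - dR)%N
                else 0).

Definition expand (x : option 'I_N) (P R : {poly K}) : laurent :=
  match x with Some i => expand_fin (lam i) P R | None => expand_inf P R end.

(* principal part Pr_x(L) of a Laurent series L in s_x, as a rational function
   num/den of t *)
Definition pr_num (x : option 'I_N) (L : laurent) : {poly K} :=
  match x with
  | Some i => \sum_(k < L.1) L.2 k *: ('X - (lam i)%:P) ^+ k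
  | None => \sum_(k < L.1.+1) L.2 k *: 'X ^+ (L.1 - k)%N
  end.
Definition pr_den (x : option 'I_N) (L : laurent) : {poly K} :=
  match x with
  | Some i => ('X - (lam i)%:P) ^+ L.1
  | None => 1
  end.

Definition expand_pr (mu x : option 'I_N) (L : laurent) : laurent :=
  expand mu (pr_num x L) (pr_den x L).

Definition Qpoly : {poly K} := \prod_(i < N) ('X - (lam i)%:P).
Definition h_num : {poly K} := Qpoly^`().
Definition h_den : {poly K} := 2%:P * Qpoly.
Definition phi_h (x : option 'I_N) : laurent := expand x h_num h_den.

(* d/dt on power series in s_x: d/ds at finite points, -s^2 d/ds at oo *)
Definition dt (x : option 'I_N) (f : nat -> K) : nat -> K :=
  match x with
  | Some _ => fun n => (n.+1)%:R * f n.+1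
  | None => fun n => if n is m.+1 then - (m%:R * f m) else 0
  end.

End Defs.

(* Main.v *)
Require Import Defs.
From Stdlib Require Import Lia.
From HB Require Import structures.
From mathcomp Require Import all_boot all_order all_algebra.
Set Implicit Arguments. Unset Strict Implicit. Unset Printing Implicit Defensive.
Import Order.TTheory GRing.Theory Num.Theory.
Local Open Scope ring_scope.

Lemma sq_le_exp e : (e * e <= 4 * 2 ^ e)%N.
Proof.
elim: e => [|e ih] //.
case: (ltnP e 3) => he.
  by case: e he {ih} => [|[|[|]]].
have h1 : (e.+1 * e.+1 <= 2 * (e * e))%N.
  move/ssrnat.leP: he => he; apply/ssrnat.leP; rewrite -!multE; nia.
by apply: leq_trans h1 _; rewrite expnS [(4 * _)%N]mulnCA leq_mul2l /=.
Qed.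

Lemma exp_dom (a : nat) : exists E0, forall e, (E0 <= e)%N -> (a * e < 2 ^ e)%N.
Proof.
exists (8 * a + 1)%N => e he.
have h := sq_le_exp e.
have h2 : (8 * a * e <= e * e)%N by rewrite leq_mul2r; apply/orP; right; apply: leq_trans he; rewrite addn1.
have h3 : (0 < 2 ^ e)%N by rewrite expn_gt0.
move: h h2 h3; set X := (2 ^ e)%N; set Y := (e * e)%N; set Z := (a * e)%N.
have -> : (8 * a * e = 8 * Z)%N by rewrite /Z mulnA.
move=> /ssrnat.leP h /ssrnat.leP h2 /ssrnat.ltP h3; apply/ssrnat.ltP; rewrite -!multE in h h2; lia.
Qed.

Lemma eventually_log (p A K1 D : nat) : (1 < p)%N ->
  exists L, forall l, (L <= l)%N -> (K1 * (trunc_log p (2 * l + A) + D) <= l)%N.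
Proof.
move=> p1.
have [E0 hE] := exp_dom (2 * K1 + (2 * K1 * D + A + 1)).
exists (K1 * (E0.+1 + D))%N => l hl.
set e := trunc_log p (2 * l + A).
case: (ltnP e E0.+1) => he.
  apply: leq_trans hl; rewrite leq_mul2l; apply/orP; right.
  by rewrite leq_add2r ltnW.
rewrite leqNgt; apply/negP => hlt.
have h1 := hE e (ltnW he).
have e1 : (0 < e)%N by apply: leq_trans he.
set c := (2 * K1 * D + A + 1)%N.
have hc : (c <= c * e)%N by rewrite leq_pmulr.
rewrite mulnDl in h1.
have h2 : (2 ^ e <= p ^ e)%N.
  by case: (posnP e) => [->|e0] //; rewrite leq_exp2r.
case: (posnP (2 * l + A)) => h0.
  have : e = 0%N by rewrite /e h0 trunc_log0.
  move=> e0.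
  have l0 : l = 0%N by move/eqP: h0; rewrite addn_eq0 muln_eq0 => /andP[/orP[//|/eqP]].
  move: hlt; rewrite e0 add0n l0 => hlt; move: hl; rewrite l0 leqn0 muln_eq0.
  case/orP=> [/eqP K0|]; first by rewrite K0 in hlt.
  by rewrite addn_eq0 => /andP[_ /eqP D0]; rewrite D0 muln0 in hlt.
have h3 : (p ^ e <= 2 * l + A)%N by apply: trunc_logP.
move: h1 h2 h3 hlt hc; rewrite /c mulnDr -!mulnA; set X := (2 ^ e)%N; set Y := (p ^ e)%N.
set P := (K1 * e)%N; set Q := (K1 * D)%N; set R := ((_ + _ + _) * e)%N.
move=> /ssrnat.ltP h1 /ssrnat.leP h2 /ssrnat.leP h3 /ssrnat.ltP h4 /ssrnat.leP h5.
rewrite -!multE -!plusE in h1 h2 h3 h4 h5.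
lia.
Qed.

Section Ser.
Variable K : fieldType.

Definition tr (n : nat) (f : nat -> K) : {poly K} := \poly_(i < n.+1) f i.
Definition eqM (M : nat) (p q : {poly K}) := forall k, (k <= M)%N -> p`_k = q`_k.
Definition Dp (p : {poly K}) : {poly K} := 'X * p^`().

Lemma coef_tr n f k : (k <= n)%N -> (tr n f)`_k = f k.
Proof. by move=> h; rewrite coef_poly ltnS h. Qed.

Lemma coef_Dp q k : (Dp q)`_k = k%:R * q`_k.
Proof.
rewrite /Dp coefXM; case: k => [|k] /=; first by rewrite mul0r.
by rewrite coef_deriv mulr_natl.
Qed.

Lemma Dp_mul q r : Dp (q * r) = Dp q * r + q * Dp r.
Proof. by rewrite /Dp derivM mulrDr mulrA mulrCA. Qed.

Lemma Dp_add q r : Dp (q + r) = Dp q + Dp r.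
Proof. by rewrite /Dp derivD mulrDr. Qed.

Lemma Dp_scale c q : Dp (c *: q) = c *: Dp q.
Proof. by rewrite /Dp derivZ scalerAr. Qed.

Variable M : nat.

Lemma eqM_refl q : eqM M q q. Proof. by []. Qed.
Lemma eqM_sym q r : eqM M q r -> eqM M r q.
Proof. by move=> h k hk; rewrite h. Qed.
Lemma eqM_trans q r s : eqM M q r -> eqM M r s -> eqM M q s.
Proof. by move=> h1 h2 k hk; rewrite h1 // h2. Qed.
Lemma eqM_add q q' r r' : eqM M q q' -> eqM M r r' -> eqM M (q + r) (q' + r').
Proof. by move=> h1 h2 k hk; rewrite !coefD h1 // h2. Qed.
Lemma eqM_opp q q' : eqM M q q' -> eqM M (- q) (- q').
Proof. by move=> h k hk; rewrite !coefN h. Qed.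
Lemma eqM_sub q q' r r' : eqM M q q' -> eqM M r r' -> eqM M (q - r) (q' - r').
Proof. by move=> h1 h2; apply: eqM_add h1 (eqM_opp h2). Qed.
Lemma eqM_scale c q q' : eqM M q q' -> eqM M (c *: q) (c *: q').
Proof. by move=> h k hk; rewrite !coefZ h. Qed.
Lemma eqM_mul q q' r r' : eqM M q q' -> eqM M r r' -> eqM M (q * r) (q' * r').
Proof.
move=> h1 h2 k hk; rewrite !coefM; apply: eq_bigr => [[j hj]] _ /=.
rewrite h1 ?h2 //; first exact: leq_trans (leq_subr _ _) hk.
exact: leq_trans (hj : (j <= k)%N) hk.
Qed.
Lemma eqM_D q q' : eqM M q q' -> eqM M (Dp q) (Dp q').
Proof. by move=> h k hk; rewrite !coef_Dp h. Qed.

Lemma ps_mul_tr f g k : (k <= M)%N -> ps_mul f g k = (tr M f * tr M g)`_k.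
Proof.
move=> hk; rewrite coefM /ps_mul; apply: eq_bigr => [[j hj]] _ /=.
rewrite !coef_tr //; first exact: leq_trans (leq_subr _ _) hk.
exact: leq_trans (hj : (j <= k)%N) hk.
Qed.

Lemma eqM_cancel u X : eqM M (u * X) 0 -> u`_0 != 0 -> eqM M X 0.
Proof.
move=> h u0.
suff: forall k, (k <= M)%N -> forall j, (j <= k)%N -> X`_j = 0.
  by move=> H k hk; rewrite coef0 (H k hk k).
elim=> [|k ih] hk j hj.
  move: hj; rewrite leqn0 => /eqP ->.
  have := h 0%N isT; rewrite coefM big_ord1 coef0 subnn => /eqP.
  by rewrite mulf_eq0 (negPf u0) /= => /eqP.
rewrite leq_eqVlt in hj; case/orP: hj => [/eqP ->|hj]; last first.
  by apply: ih => //; apply: ltnW.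
have := h k.+1 hk; rewrite coefM big_ord_recl /= subn0 coef0.
rewrite big1 ?addr0; last first.
  move=> [i hi] _ /=; rewrite ih ?mulr0 //; first exact: ltnW.
  by rewrite subSS leq_subr.
by move/eqP; rewrite mulf_eq0 (negPf u0) /= => /eqP.
Qed.

Lemma tr_eqM f g : (forall k, (k <= M)%N -> f k = g k) -> tr M f = tr M g.
Proof. by move=> h; apply/polyP => k; rewrite !coef_poly; case: ifP => // hk; rewrite h. Qed.

End Ser.

Section Val.
Variable K : fieldType.
Variable v : K -> int.
Variable p : nat.
Hypothesis hp : prime p /\ (2 < p)%N.
Hypothesis hchar : forall n : nat, (n.+1)%:R != 0 :> K.
Hypothesis hmul : forall x y : K, x != 0 -> y != 0 -> v (x * y) = v x + v y.
Hypothesis hult : forall x y : K, x != 0 -> y != 0 -> x + y != 0 ->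
              Num.min (v x) (v y) <= v (x + y).
Hypothesis hvp : v (p%:R) = 1.

Lemma v1 : v 1 = 0.
Proof.
have := hmul (oner_neq0 K) (oner_neq0 K); rewrite mulr1 => e.
by apply: (addrI (v 1)); rewrite addr0 -e.
Qed.

Lemma vNone : v (-1) = 0.
Proof.
have h1 : (-1 : K) != 0 by rewrite oppr_eq0 oner_neq0.
have := hmul h1 h1; rewrite mulrNN mulr1 v1 => /eqP.
by rewrite eq_sym -mulr2z mulrn_eq0 /= => /eqP.
Qed.

Lemma vN x : v (- x) = v x.
Proof.
have [->|x0] := eqVneq x 0; first by rewrite oppr0.
have h1 : (-1 : K) != 0 by rewrite oppr_eq0 oner_neq0.
by rewrite -mulN1r hmul // vNone add0r.
Qed.

Lemma vV x : x != 0 -> v (x^-1) = - v x.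
Proof.
move=> x0; have xi0 : x^-1 != 0 by rewrite invr_eq0.
have := hmul x0 xi0; rewrite mulfV // v1 => e.
by apply: (addrI (v x)); rewrite -e subrr.
Qed.

Lemma vge0 a : vge v 0 a. Proof. by left. Qed.

Lemma vge_le x a b : vge v x a -> b <= a -> vge v x b.
Proof. by case=> [->|h] hb; [left|right; apply: le_trans h]. Qed.

Lemma vge_mul x y a b : vge v x a -> vge v y b -> vge v (x * y) (a + b).
Proof.
have [->|x0] := eqVneq x 0; first by rewrite mul0r; left.
have [->|y0] := eqVneq y 0; first by rewrite mulr0; left.
case=> [/eqP|ha]; first by rewrite (negPf x0).
case=> [/eqP|hb]; first by rewrite (negPf y0).
by right; rewrite hmul // lerD.
Qed.

Lemma vge_add x y a : vge v x a -> vge v y a -> vge v (x + y) a.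
Proof.
have [->|x0] := eqVneq x 0; first by rewrite add0r.
have [->|y0] := eqVneq y 0; first by rewrite addr0.
have [->|s0] := eqVneq (x + y) 0; first by left.
case=> [/eqP|ha]; first by rewrite (negPf x0).
case=> [/eqP|hb]; first by rewrite (negPf y0).
right; apply: le_trans (hult x0 y0 s0).
by rewrite le_min ha hb.
Qed.

Lemma vge_opp x a : vge v x a -> vge v (- x) a.
Proof. by case=> [->|h]; [left; rewrite oppr0|right; rewrite vN]. Qed.

Lemma vge_sub x y a : vge v x a -> vge v y a -> vge v (x - y) a.
Proof. by move=> hx hy; apply: vge_add hx (vge_opp hy). Qed.

Lemma vge_sum (I : Type) (r : seq I) (P : pred I) (F : I -> K) a :
  (forall i, P i -> vge v (F i) a) -> vge v (\sum_(i <- r | P i) F i) a.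
Proof.
move=> h; elim/big_rec: _ => [|i x Pi hx]; first by left.
by apply: vge_add => //; apply: h.
Qed.

Lemma vge_natmul x n a : vge v x a -> vge v (x *+ n) a.
Proof.
move=> h; elim: n => [|n ih]; first by rewrite mulr0n; left.
by rewrite mulrS; apply: vge_add.
Qed.

Lemma vge_nat n : vge v (n%:R) 0.
Proof. by apply: vge_natmul; right; rewrite v1. Qed.

Lemma vge_div x y a : vge v x a -> y != 0 -> vge v (x / y) (a - v y).
Proof.
move=> hx y0; have := vge_mul hx (b := - v y) (y := y^-1).
by apply; right; rewrite vV.
Qed.

Lemma vge_v x : vge v x (v x).
Proof. by right. Qed.

Lemma nat_neq0 n : (0 < n)%N -> n%:R != 0 :> K.
Proof. by case: n => // n _; apply: hchar. Qed.

Lemma v_nat_ge0 n : (0 < n)%N -> 0 <= v (n%:R).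
Proof.
move=> n0; case: (vge_nat n) => // e.
by move: (nat_neq0 n0); rewrite e eqxx.
Qed.

Lemma v_coprime b : (0 < b)%N -> coprime b p -> v (b%:R) = 0.
Proof.
move=> b0 cop.
have p0 : (0 < p)%N by case: hp => /prime_gt0.
have [a _ /dvdnP [k hk]] := Bezoutl b p0.
move: cop; rewrite /coprime gcdnC => /eqP g1; rewrite g1 in hk.
(* 1 + a*b = k*p *)
have hb := v_nat_ge0 b0.
have [->|hbp] : v b%:R = 0 \/ 0 < v b%:R.
  by rewrite lt_neqAle eq_sym hb andbT; case: eqP; [left|right].
  by [].
exfalso.
have e : (1 : K) = (k * p)%:R - (a%:R * b%:R).
  by rewrite -hk natrD natrM addrK.
have h1 : vge v (1 : K) 1.
  rewrite e; apply: vge_sub.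
    rewrite natrM; have := @vge_mul k%:R p%:R 0 1 (vge_nat k).
    by rewrite add0r; apply; right; rewrite hvp.
  have := @vge_mul a%:R b%:R 0 1 (vge_nat a).
  by rewrite add0r; apply; right.
case: h1 => [/eqP|]; first by rewrite oner_eq0.
by rewrite v1.
Qed.

Lemma v_pow_p n : v ((p ^ n)%:R) = n%:Z.
Proof.
have p0 : p%:R != 0 :> K by apply: nat_neq0; case: hp => /prime_gt0.
elim: n => [|n ih]; first by rewrite expn0 v1.
rewrite expnS natrM hmul //; last by rewrite natrX expf_neq0.
by rewrite ih hvp -addn1 PoszD addrC.
Qed.

Lemma v_nat_le n : (0 < n)%N -> v (n%:R) <= (trunc_log p n)%:Z.
Proof.
move=> n0.
have p1 : (1 < p)%N by case: hp => /prime_gt1.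
have hp0 : prime p by case: hp.
rewrite -{1}(partnC p n0) natrM hmul; last first.
- by apply: nat_neq0; rewrite part_gt0.
- by apply: nat_neq0; rewrite part_gt0.
rewrite p_part v_pow_p v_coprime; last first.
- rewrite coprime_sym; apply: (pnat_coprime (pnat_id hp0)).
  exact: part_pnat.
- exact: part_gt0.
rewrite addr0 lez_nat; apply: trunc_log_max => //.
by rewrite -p_part dvdn_leq // dvdn_part.
Qed.

Lemma v2 : v (2%:R) = 0.
Proof.
apply: v_coprime => //.
case: hp => pr p2; rewrite coprime_sym prime_coprime //.
by apply/negP => /dvdn_leq => /(_ isT); rewrite leqNgt p2.
Qed.




Lemma ps_inv_seq_size (u : nat -> K) n : size (ps_inv_seq u n) = n.+1.
Proof. by elim: n => //= n ih; rewrite size_rcons ih. Qed.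

Lemma ps_inv_seq_nth (u : nat -> K) n k : (k <= n)%N -> nth 0 (ps_inv_seq u n) k = ps_inv u k.
Proof.
move=> hk; rewrite /ps_inv; elim: n hk => [|n ih] hk.
  by move: hk; rewrite leqn0 => /eqP ->.
rewrite leq_eqVlt in hk; case/orP: hk => [/eqP -> //|hk].
by rewrite /= nth_rcons ps_inv_seq_size hk ih.
Qed.

Lemma ps_invS (u : nat -> K) m :
  ps_inv u m.+1 = - (u 0%N)^-1 * \sum_(k < m.+1) u k.+1 * ps_inv u (m - k)%N.
Proof.
rewrite {1}/ps_inv /= nth_rcons ps_inv_seq_size ltnn eqxx.
congr (_ * _); apply: eq_bigr => [[k hk]] _ /=.
by rewrite ps_inv_seq_nth // leq_subr.
Qed.

Lemma ps_inv_spec (u : nat -> K) n : u 0%N != 0 ->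
  ps_mul u (ps_inv u) n = (n == 0%N)%:R.
Proof.
move=> u0; case: n => [|m].
  by rewrite /ps_mul big_ord1 /ps_inv /= mulfV.
rewrite /ps_mul big_ord_recl /= subn0 ps_invS mulrA mulrN mulfV // mulN1r.
rewrite addrC; apply/eqP; rewrite subr_eq0; apply/eqP.
by apply: eq_bigr => [[k hk]] _ /=; rewrite subSS.
Qed.



Lemma vge_mul0 x y b : vge v x 0 -> vge v y b -> vge v (x * y) b.
Proof. by move=> hx hy; have := vge_mul hx hy; rewrite add0r. Qed.
Lemma vge_mulr0 x y b : vge v x b -> vge v y 0 -> vge v (x * y) b.
Proof. by move=> hx hy; have := vge_mul hx hy; rewrite addr0. Qed.

Lemma ps_inv_int (u : nat -> K) : u 0%N != 0 -> v (u 0%N) = 0 ->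
  (forall k, vge v (u k) 0) -> forall n, vge v (ps_inv u n) 0.
Proof.
move=> u0 v0 hu.
suff H : forall N k, (k <= N)%N -> vge v (ps_inv u k) 0.

  by move=> m; exact: (H m m (leqnn m)).
elim=> [|n ih] k hk.
  move: hk; rewrite leqn0 => /eqP ->; rewrite /ps_inv /=.
  by right; rewrite vV // v0.
rewrite leq_eqVlt in hk; case/orP: hk => [/eqP ->|hk]; last exact: ih.
rewrite ps_invS; apply: vge_mul0.
  by apply: (vge_opp); right; rewrite vV ?invr_eq0 // v0.
apply: vge_sum => -[j hj] _ /=.
by apply: vge_mul0 => //; apply: ih; rewrite leq_subr.
Qed.

Lemma vge_ps_mul (f g : nat -> K) a b n :
  (forall k, vge v (f k) a) -> (forall k, vge v (g k) b) -> vge v (ps_mul f g n) (a + b).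
Proof.
move=> hf hg; apply: vge_sum _ => i _; exact: vge_mul.
Qed.

(* square root series of u with u 0 = 1 *)
Fixpoint sq_seq (u : nat -> K) (n : nat) : seq K :=
  match n with
  | 0 => [:: 1]
  | m.+1 => let s := sq_seq u m in
      rcons s ((u m.+1 - \sum_(k < m) nth 0 s k.+1 * nth 0 s (m - k)%N) / 2%:R)
  end.
Definition sqs (u : nat -> K) (n : nat) : K := nth 0 (sq_seq u n) n.

Lemma sq_seq_size u n : size (sq_seq u n) = n.+1.
Proof. by elim: n => //= n ih; rewrite size_rcons ih. Qed.

Lemma sq_seq_nth u n k : (k <= n)%N -> nth 0 (sq_seq u n) k = sqs u k.
Proof.
move=> hk; rewrite /sqs; elim: n hk => [|n ih] hk.
  by move: hk; rewrite leqn0 => /eqP ->.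
rewrite leq_eqVlt in hk; case/orP: hk => [/eqP -> //|hk].
by rewrite /= nth_rcons sq_seq_size hk ih.
Qed.

Lemma sqsS u m : sqs u m.+1 =
  (u m.+1 - \sum_(k < m) sqs u k.+1 * sqs u (m - k)%N) / 2%:R.
Proof.
rewrite {1}/sqs /= nth_rcons sq_seq_size ltnn eqxx.
congr ((_ - _) / _); apply: eq_bigr => [[k hk]] _ /=.
by rewrite !sq_seq_nth // ?leq_subr.
Qed.

Lemma sqs0 u : sqs u 0 = 1. Proof. by []. Qed.

Lemma sqs_spec u n : u 0%N = 1 -> ps_mul (sqs u) (sqs u) n = u n.
Proof.
move=> u0; case: n => [|m]; first by rewrite /ps_mul big_ord1 sqs0 mulr1.
rewrite /ps_mul big_ord_recl big_ord_recr /= subn0 subnn sqs0 mul1r mulr1.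
have h2 : (2%:R : K) != 0 by apply: (hchar 1).
rewrite sqsS.
set S := \sum_(k < m) _.
by rewrite addrCA -mulr2n -[X in S + X]mulr_natr mulfVK // addrC subrK.
Qed.

Lemma sqs_int u : (forall k, vge v (u k) 0) -> forall n, vge v (sqs u n) 0.
Proof.
move=> hu.
suff H : forall N k, (k <= N)%N -> vge v (sqs u k) 0.
  by move=> m; exact: (H m m (leqnn m)).
elim=> [|n ih] k hk.
  by move: hk; rewrite leqn0 => /eqP ->; right; rewrite sqs0 v1.
rewrite leq_eqVlt in hk; case/orP: hk => [/eqP ->|hk]; last exact: ih.
rewrite sqsS.
have := @vge_div (u n.+1 - \sum_(k < n) sqs u k.+1 * sqs u (n - k)%N) 2%:R 0.
rewrite v2 subr0; apply; last exact: (hchar 1).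
apply: vge_sub _ _ _ => //; apply: vge_sum => -[j hj] _ /=.
by apply: vge_mul0; apply: ih => //; rewrite leq_subr.
Qed.



Lemma mono3 (R : comPzRingType) (x y z w : R) : x * (y * (z * w)) = w * (y * (x * z)).
Proof. by rewrite mulrCA [RHS]mulrCA; congr (_ * _); rewrite mulrA mulrC. Qed.

Lemma ring_id1 (R : comPzRingType) (u s a dV G V dG f : R) :
  u * (s * (dV * G + V * dG) + a * (V * G) - V * (s * dG + f * G)) =
  G * (s * (u * dV) + a * (u * V) - V * (u * f)).
Proof.
rewrite !mulrDr !mulrN !mulrDr opprD (mono3 u s dV G) (mono3 u a V G) (mono3 u V f G) [s * (V * dG)]mulrCA.
set A := G * _; set B := u * _; set C := G * (a * _); set D := G * (V * _).
by rewrite [A + B + C]addrAC addrA addrK.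
Qed.

Lemma ring_id2 (R : comPzRingType) (u s a V dU : R) :
  s * (V * dU) + a * (u * V) - V * (a * u + s * dU) = 0.
Proof.
rewrite mulrDr opprD [V * (s * dU)]mulrCA [V * (a * u)]mulrCA [u * V]mulrC.
by rewrite addrACA addrA subrK subrr.
Qed.

Lemma tr_scale n c (f : nat -> K) : tr n (fun k => c * f k) = c%:P * tr n f.
Proof. by apply/polyP => k; rewrite coefCM !coef_poly; case: ifP; rewrite ?mulr0. Qed.

Lemma Dp_C (c : K) : Dp c%:P = 0.
Proof. by rewrite /Dp derivC mulr0. Qed.

Lemma core (s a : K) (U f G E : nat -> K) (B : int) (T : nat -> int) :
  U 0%N != 0 -> v (U 0%N) = 0 -> (forall k, vge v (U k) 0) ->
  (forall n, ps_mul (fun k => 2%:R * U k) f n = a * (2%:R * U n) + s * (n%:R * U n)) ->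
  (forall n, s * (n%:R * G n) + ps_mul f G n = E n) ->
  (forall n, vge v (E n) B) ->
  (forall n, s * n%:R + a != 0) ->
  (forall n, v (s * n%:R + a) <= T n) ->
  (forall m n, (m <= n)%N -> T m <= T n) ->
  forall m, vge v (G m) (B - T m).
Proof.
move=> U0 vU0 hU hf hG hE hden hT hTm m.
set c := (U 0%N)^-1.
have c0 : c != 0 by rewrite invr_eq0.
set u := fun k => c * U k.
have u0 : u 0%N = 1 by rewrite /u mulVf.
have hu : forall k, vge v (u k) 0.
  by move=> k; apply: vge_mul0 => //; right; rewrite vV // vU0 oppr0.
set V := sqs u.
have hV : forall k, vge v (V k) 0 by apply: sqs_int.
have V0 : V 0%N = 1 by [].
set W := ps_inv V.
have hW : forall k, vge v (W k) 0.
  by apply: ps_inv_int => //; rewrite V0 ?oner_neq0 ?v1.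
set H := ps_mul V G.
have key : forall k, (k <= m)%N -> (s * k%:R + a) * H k = ps_mul V E k.
  set Up := tr m U; set u2 := tr m (fun k => 2%:R * U k).
  set fp := tr m f; set Gp := tr m G; set Ep := tr m E; set Vp := tr m V.
  have u2E : u2 = 2%:R%:P * Up by rewrite /u2 tr_scale.
  have ha : eqM m (u2 * fp) (a%:P * u2 + s%:P * Dp Up).
    move=> k hk; rewrite -ps_mul_tr // hf coefD !coefCM coef_Dp !coef_tr //.
  have hb : eqM m (Vp * Vp) (c%:P * Up).
    by move=> k hk; rewrite -ps_mul_tr // sqs_spec // coefCM coef_tr.
  have hc : eqM m (s%:P * Dp Gp + fp * Gp) Ep.
    by move=> k hk; rewrite coefD coefCM coef_Dp coef_tr // -ps_mul_tr // hG coef_tr.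
  have he : eqM m (u2 * Dp Vp) (Vp * Dp Up).
    have h1 := eqM_D hb.
    rewrite Dp_mul Dp_mul Dp_C mul0r add0r in h1.
    have h2 := eqM_mul (@eqM_refl _ m Vp) h1.
    have h3 : eqM m (c%:P * (u2 * Dp Vp)) (c%:P * (Vp * Dp Up)).
      apply: eqM_trans (eqM_trans _ h2) _; last first.
        by rewrite mulrCA.
      rewrite [Dp Vp * Vp]mulrC -mulr2n mulrnAr mulrA.
      apply: (@eqM_trans _ _ _ ((c%:P * Up) * Dp Vp *+ 2)); last first.
        by apply: eqM_sym; move=> k hk; rewrite !coefMn mulrA; congr (_ *+ 2); exact: (eqM_mul hb (@eqM_refl _ m _)).
      by rewrite u2E polyC_natr mulr_natl mulrnAr mulrnAl.
    have h4 := eqM_mul (@eqM_refl _ m (c^-1)%:P) h3.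
    by rewrite !(mulrA (c^-1)%:P) -polyCM mulVf // !mul1r in h4.
  have hX : eqM m (u2 * (s%:P * Dp (Vp * Gp) + a%:P * (Vp * Gp) - Vp * Ep)) 0.
    rewrite Dp_mul.
    apply: (@eqM_trans _ _ _ (u2 * (s%:P * (Dp Vp * Gp + Vp * Dp Gp) + a%:P * (Vp * Gp)
               - Vp * (s%:P * Dp Gp + fp * Gp)))).
      apply: eqM_mul => //; apply: eqM_sub => //; apply: eqM_mul => //.
      exact: eqM_sym.
    rewrite ring_id1.
    apply: (@eqM_trans _ _ _ (Gp * (s%:P * (Vp * Dp Up) + a%:P * (u2 * Vp)
               - Vp * (a%:P * u2 + s%:P * Dp Up)))).
      apply: eqM_mul => //; apply: eqM_sub; first apply: eqM_add => //.
        by apply: eqM_mul.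
      by apply: eqM_mul.
    by rewrite ring_id2 mulr0.
  have u20 : u2`_0 != 0.
    by rewrite u2E coefCM coef_tr // mulf_neq0 // (hchar 1).
  have hX' := eqM_cancel hX u20.
  move=> k hk; have := hX' k hk.
  rewrite coef0 coefB coefD coefCM coef_Dp coefCM -!ps_mul_tr // => /eqP.
  by rewrite subr_eq0 => /eqP <-; rewrite mulrDl mulrA.
have hH : forall k, (k <= m)%N -> vge v (H k) (B - T m).
  move=> k hk.
  have -> : H k = ps_mul V E k / (s * k%:R + a).
    by rewrite -key // [_ * H k]mulrC (mulfK (hden k)).
  have hVE : vge v (ps_mul V E k) B.
    by have := @vge_ps_mul V E 0 B k hV hE; rewrite add0r.
  apply: vge_le (vge_div hVE (hden k)) _.
  by apply: lerB => //; apply: le_trans (hT k) (hTm _ _ hk).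
set Wp := tr m W; set Vp := tr m V; set Gp := tr m G; set Hp := tr m H.
have h1 : eqM m (Wp * Vp) 1.
  by move=> k hk; rewrite mulrC -ps_mul_tr // ps_inv_spec ?coef1 // V0 oner_neq0.
have h2 : eqM m (Vp * Gp) Hp.
  by move=> k hk; rewrite -ps_mul_tr // coef_tr.
have h3 : eqM m Gp (Wp * Hp).
  apply: (@eqM_trans _ _ _ ((Wp * Vp) * Gp)).
    by rewrite -{1}[Gp]mul1r; apply: eqM_mul => //; apply: eqM_sym.
  by rewrite -mulrA; apply: eqM_mul.
have := h3 m (leqnn m); rewrite coef_tr // -ps_mul_tr // => ->.
apply: vge_sum => -[j hj] _ /=; apply: vge_mul0 => //.
by apply: hH; rewrite leq_subr.
Qed.

Lemma conv_of_bound (G : nat -> K) (C : int) (A : nat) :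
  (forall m, vge v (G m) (C - (trunc_log p (2 * m + A))%:Z)) -> conv_open_disc v G.
Proof.
move=> hG c hc N.
have p1 : (1 < p)%N by case: hp => /prime_gt1.
set K1 := `|denq c|%N.
have hK1 : 1 <= c * K1%:R.
  rewrite /K1 natr_absz gtr0_norm ?denq_gt0 // -numqE ler1z -gtz0_ge1.
  by rewrite numq_gt0.
set D := `|N - C|%N.
have hD : N - C <= D%:Z by apply: lez_abs.
have [L hL] := eventually_log A K1 D p1.
exists L => l hl; case: (hG l) => [->|hv]; [by left|right].
have h1 := hL l hl.
set e := trunc_log p (2 * l + A) in hv h1.
have h2 : (e + D)%:R <= c * l%:R :> rat.
  apply: le_trans (_ : c * (K1 * (e + D))%:R <= _); last first.
    by apply: ler_wpM2l; [exact: ltW | rewrite ler_nat].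
  by rewrite natrM mulrA -{1}[(e + D)%:R]mul1r; apply: ler_wpM2r.
have h3 : N <= (C - e%:Z) + (e + D)%:Z.
  by rewrite PoszD addrA subrK -lerBlDl.
apply: le_trans (_ : ((C - e%:Z)%:~R + (e + D)%:R : rat) <= _).
  by move: h3; rewrite -(ler_int rat) intrD.
by apply: lerD => //; rewrite ler_int.
Qed.

Definition pint (q : {poly K}) := forall k, vge v q`_k 0.

Lemma pint_mul q r : pint q -> pint r -> pint (q * r).
Proof.
move=> hq hr k; rewrite coefM; apply: vge_sum => i _; exact: vge_mul0.
Qed.

Lemma pint_add q r : pint q -> pint r -> pint (q + r).
Proof. by move=> hq hr k; rewrite coefD; apply: vge_add. Qed.

Lemma pint_C c : vge v c 0 -> pint c%:P.
Proof. by move=> hc k; rewrite coefC; case: eqP => // _; left. Qed.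

Lemma pint_1 : pint 1.
Proof. by apply: pint_C; right; rewrite v1. Qed.

Lemma pint_X : pint 'X.
Proof. by move=> k; rewrite coefX; case: eqP => _; [right; rewrite v1|left]. Qed.

Lemma pint_exp q n : pint q -> pint (q ^+ n).
Proof.
move=> hq; elim: n => [|n ih]; first by rewrite expr0; exact: pint_1.
by rewrite exprS; apply: pint_mul.
Qed.

Lemma pint_prod (I : Type) (r : seq I) (P : pred I) (F : I -> {poly K}) :
  (forall i, P i -> pint (F i)) -> pint (\prod_(i <- r | P i) F i).
Proof.
move=> h; elim/big_rec: _ => [|i x Pi hx]; first exact: pint_1.
by apply: pint_mul => //; apply: h.
Qed.

Lemma seq_bounded (s : seq K) : exists B, forall k, vge v (nth 0 s k) B.
Proof.
elim: s => [|x s [B hB]]; first by exists 0 => k; rewrite nth_nil; left.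
exists (Num.min B (v x)) => -[|k] /=.
  by apply: vge_le (vge_v x) _; rewrite ge_min lexx orbT.
by apply: vge_le (hB k) _; rewrite ge_min lexx.
Qed.

Lemma poly_bounded (q : {poly K}) : exists B, forall k, vge v q`_k B.
Proof. exact: seq_bounded. Qed.

Lemma find_nz (s : seq K) k : (forall j, (j < k)%N -> nth 0 s j = 0) -> nth 0 s k != 0 ->
  find (fun c => c != 0) s = k.
Proof.
elim: s k => [|x s ih] k h hk; first by rewrite nth_nil eqxx in hk.
case: k h hk => [|k] h hk /=; first by rewrite hk.
have x0 : x = 0 := h 0%N isT.
rewrite x0 eqxx /=; congr S; apply: ih => // j hj.
exact: (h j.+1).
Qed.

Lemma comp_prod (I : Type) (r : seq I) (P : pred I) (F : I -> {poly K}) q :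
  (\prod_(i <- r | P i) F i) \Po q = \prod_(i <- r | P i) (F i \Po q).
Proof.
elim/big_rec2: _ => [|i x y Pi IH]; first by rewrite comp_polyC.
by rewrite comp_polyM IH.
Qed.

Lemma ps_mul_inv_cancel (u P : nat -> K) n : u 0%N != 0 ->
  ps_mul u (ps_mul P (ps_inv u)) n = P n.
Proof.
move=> u0.
have h1 : eqM n (tr n u * tr n (ps_mul P (ps_inv u))) (tr n P * (tr n u * tr n (ps_inv u))).
  apply: (@eqM_trans _ _ _ (tr n u * (tr n P * tr n (ps_inv u)))).
    apply: eqM_mul => // k hk; rewrite coef_tr // -ps_mul_tr //.
  by rewrite mulrCA.
have h2 : eqM n (tr n u * tr n (ps_inv u)) 1.
  by move=> k hk; rewrite -ps_mul_tr // ps_inv_spec // coef1.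
have := h1 n (leqnn n); rewrite -ps_mul_tr // => ->.
by rewrite (eqM_mul (@eqM_refl _ n (tr n P)) h2) // mulr1 coef_tr.
Qed.

Lemma lcoef_pos (L : laurent K) (j : nat) : lcoef L (Posz j) = L.2 (j + L.1)%N.
Proof. by rewrite /lcoef -PoszD. Qed.

Lemma bound_list (T : eqType) (s : seq T) (P : T -> int -> Prop) :
  (forall y B B', P y B -> B' <= B -> P y B') ->
  (forall y, exists B, P y B) -> exists B, forall y, y \in s -> P y B.
Proof.
move=> hmon hex; elim: s => [|y s [B hB]]; first by exists 0.
have [By hy] := hex y.
exists (Num.min B By) => z; rewrite in_cons => /orP[/eqP ->|hz].
  by apply: hmon hy _; rewrite ge_min lexx orbT.
by apply: hmon (hB z hz) _; rewrite ge_min lexx.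
Qed.

Lemma eq_ps_mul (f f' g g' : nat -> K) n : (forall k, f k = f' k) -> (forall k, g k = g' k) ->
  ps_mul f g n = ps_mul f' g' n.
Proof. by move=> hf hg; apply: eq_bigr => i _; rewrite hf hg. Qed.

Lemma coef_ne0_size (q : {poly K}) i : q`_i != 0 -> (i < size q)%N.
Proof. by apply: contraR; rewrite -leqNgt => h; rewrite nth_default. Qed.

Lemma pint_sub q r : pint q -> pint r -> pint (q - r).
Proof. by move=> hq hr k; rewrite coefB; apply: vge_sub. Qed.

Lemma comp_exp (q r : {poly K}) n : (q ^+ n) \Po r = (q \Po r) ^+ n.
Proof.
elim: n => [|n ih]; first by rewrite !expr0 comp_polyC.
by rewrite !exprS comp_polyM ih.
Qed.

Lemma v_exp c n : c != 0 -> v c = 0 -> c ^+ n != 0 /\ v (c ^+ n) = 0.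
Proof.
move=> c0 vc; elim: n => [|n [ih1 ih2]]; first by rewrite expr0 oner_neq0 v1.
by rewrite exprS mulf_neq0 // hmul // vc ih2.
Qed.

Lemma efb (a : K) (P R : {poly K}) (m0 : nat) :
  (forall j, (j < m0)%N -> (R \Po ('X + a%:P))`_j = 0) ->
  (R \Po ('X + a%:P))`_m0 != 0 -> v ((R \Po ('X + a%:P))`_m0) = 0 ->
  pint (R \Po ('X + a%:P)) ->
  exists B, forall j : nat, vge v (lcoef (expand_fin a P R) j) B.
Proof.
move=> hz hm hv hint.
have [B hB] := poly_bounded (P \Po ('X + a%:P)).
exists (B + 0) => j; rewrite lcoef_pos /expand_fin /=.
rewrite (find_nz hz hm).
apply: vge_ps_mul => // k; apply: ps_inv_int => //.
Qed.

Lemma efb_inf (P R : {poly K}) : R \is monic -> pint R ->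
  exists B, forall j : nat, vge v (lcoef (expand_inf P R) j) B.
Proof.
move=> hmon hint.
have [B hB] := poly_bounded P.
exists (B + 0) => j; rewrite lcoef_pos /expand_inf /=.
case: ifP => _; last by left.
apply: vge_ps_mul => k.
  by rewrite /rev_coef; case: ifP => _; [apply: hB|left].
apply: ps_inv_int => [||k'].
- by rewrite /rev_coef leq0n subn0 -lead_coefE (monicP hmon) oner_neq0.
- by rewrite /rev_coef leq0n subn0 -lead_coefE (monicP hmon) v1.
- by rewrite /rev_coef; case: ifP => _; [apply: hint|left].
Qed.

Lemma shift_mul (F f G : nat -> K) d n : (forall k, (k < d)%N -> F k = 0) ->
  (forall k, F (k + d)%N = f k) -> ps_mul F G (n + d) = ps_mul f G n.
Proof.
move=> h0 hs; rewrite /ps_mul -(big_mkord xpredT (fun i => F i * G (n + d - i)%N)) -(big_mkord xpredT (fun i => f i * G (n - i)%N)).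
rewrite (@big_cat_nat _ _ _ d 0 (n + d).+1) //=; last by rewrite -addSn leq_addl.
rewrite big_nat_cond big1 ?add0r; last first.
  by move=> i /andP[/andP[_ hi] _]; rewrite h0 // mul0r.
rewrite -{1}[d]add0n big_addn -addSn addnK.
by apply: eq_bigr => i _; rewrite hs subnDr.
Qed.

Lemma odd_val (k : nat) : (k.*2.+1)%:R / 2%:R != 0 :> K /\
  v ((k.*2.+1)%:R / 2%:R) <= (trunc_log p k.*2.+1)%:Z.
Proof.
have h2 : (2%:R : K) != 0 by apply: (hchar 1).
split; first by rewrite mulf_neq0 ?invr_eq0 ?hchar.
rewrite hmul ?invr_eq0 ?hchar // vV // v2 oppr0 addr0.
exact: v_nat_le.
Qed.

Variable g : nat.
Variable lam : 'I_(g.*2.+1) -> K.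
Hypothesis hlam_int : forall i, vge v (lam i) 0.
Hypothesis hlam_dist : forall i j, i != j -> lam i - lam j != 0 /\ v (lam i - lam j) = 0.

Lemma eq_ps_inv (u u' : nat -> K) : (forall k, u k = u' k) -> forall n, ps_inv u n = ps_inv u' n.
Proof.
move=> h n; rewrite /ps_inv; congr (nth 0 _ n); elim: n => [|n ih] /=; first by rewrite h.
rewrite ih h; congr (rcons _ (_ * _)); apply: eq_bigr => k _; by rewrite h.
Qed.

Lemma XsubC_comp (b a : K) : ('X - b%:P) \Po ('X + a%:P) = 'X + (a - b)%:P.
Proof. by rewrite comp_polyB comp_polyX comp_polyC polyCB addrA. Qed.

Definition Ui (i : 'I_(g.*2.+1)) : {poly K} :=
  \prod_(j < g.*2.+1 | j != i) ('X + (lam i - lam j)%:P).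

Lemma Q_comp i : Qpoly lam \Po ('X + (lam i)%:P) = 'X * Ui i.
Proof.
rewrite /Qpoly comp_prod (bigD1 i) //= XsubC_comp subrr addr0; congr (_ * _).
by apply: eq_bigr => j _; rewrite XsubC_comp.
Qed.

Lemma Ui_int i : pint (Ui i).
Proof.
apply: pint_prod => j _; apply: pint_add; first exact: pint_X.
by apply: pint_C; apply: vge_sub.
Qed.

Lemma Ui0 i : (Ui i)`_0 != 0 /\ v ((Ui i)`_0) = 0.
Proof.
rewrite -horner_coef0 /Ui horner_prod.
elim/big_rec: _ => [|j x hj [hx1 hx2]]; first by rewrite oner_neq0 v1.
rewrite eq_sym in hj; have [h1 h2] := hlam_dist hj.
rewrite hornerD hornerX hornerC add0r mulf_neq0 //; split => //.
by rewrite hmul // h2 hx2.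
Qed.

Lemma hden_comp i : h_den lam \Po ('X + (lam i)%:P) = 2%:R%:P * ('X * Ui i).
Proof. by rewrite /h_den comp_polyM comp_polyC Q_comp. Qed.

Lemma hnum_comp i : h_num lam \Po ('X + (lam i)%:P) = Ui i + Dp (Ui i).
Proof.
have hq : ('X + (lam i)%:P)^`() = 1 by rewrite derivD derivX derivC addr0.
have := deriv_comp (Qpoly lam) ('X + (lam i)%:P).
rewrite hq mulr1 Q_comp /h_num => <-.
by rewrite derivM derivX mul1r.
Qed.

Lemma hden_coef i k : (h_den lam \Po ('X + (lam i)%:P))`_k =
  if k is k'.+1 then 2%:R * (Ui i)`_k' else 0.
Proof. by rewrite hden_comp coefCM coefXM; case: k => [|k] /=; rewrite ?mulr0. Qed.

Lemma hden_find i : find (fun c => c != 0) (h_den lam \Po ('X + (lam i)%:P)) = 1%N.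
Proof.
apply: find_nz => [[|]|] //.
  by move=> _; rewrite -/(_`_0) hden_coef.
have h2 := hchar 1; have [u0 _] := Ui0 i.
by rewrite -/(_`_1) hden_coef mulf_neq0.
Qed.

Lemma phi_fin1 i : (phi_h lam (Some i)).1 = 1%N.
Proof. by rewrite /phi_h /expand /expand_fin /= hden_find. Qed.

Lemma phi_fin2 i n : (phi_h lam (Some i)).2 n =
  ps_mul (fun k => (Ui i + Dp (Ui i))`_k) (ps_inv (fun k => 2%:R * (Ui i)`_k)) n.
Proof.
rewrite /phi_h /expand /expand_fin /= hden_find.
apply: eq_ps_mul => k; first by rewrite hnum_comp.
by apply: eq_ps_inv => k'; rewrite addn1 hden_coef.
Qed.

Lemma rhs_fin i y (L : laurent K) :
  exists B, forall j : nat, vge v (lcoef (expand_pr lam (Some i) y L) j) B.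
Proof.
rewrite /expand_pr /expand.
case: y => [j|]; last first.
  have e1 : (pr_den lam None L) \Po ('X + (lam i)%:P) = 1 by rewrite /= comp_polyC.
  apply: (@efb _ _ _ 0%N); rewrite ?e1 ?coef1 ?v1 ?oner_neq0 //; exact: pint_1.
have e1 : (pr_den lam (Some j) L) \Po ('X + (lam i)%:P) = ('X + (lam i - lam j)%:P) ^+ L.1.
  by rewrite /= comp_exp XsubC_comp.
case: (eqVneq i j) => [eij|hij].
  subst j; rewrite subrr addr0 in e1.
  apply: (@efb _ _ _ L.1); rewrite e1 -?exprX ?coefXn ?eqxx ?oner_neq0 ?v1 //.
    by move=> k hk; rewrite coefXn (ltn_eqF hk).
  by apply: pint_exp; exact: pint_X.
have [c0 vc] := hlam_dist hij.
have [cn0 vcn] := v_exp L.1 c0 vc.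
have e0 : (('X + (lam i - lam j)%:P) ^+ L.1)`_0 = (lam i - lam j) ^+ L.1.
  by rewrite -horner_coef0 horner_exp hornerD hornerX hornerC add0r.
apply: (@efb _ _ _ 0%N); rewrite e1 ?e0 //.
apply: pint_exp; apply: pint_add; first exact: pint_X.
by apply: pint_C; apply: vge_sub.
Qed.

Lemma rhs_inf y (L : laurent K) :
  exists B, forall j : nat, vge v (lcoef (expand_pr lam None y L) j) B.
Proof.
rewrite /expand_pr /expand.
case: y => [j|]; apply: efb_inf => /=.
- by apply: monic_exp; exact: monicXsubC.
- apply: pint_exp; apply: pint_sub; first exact: pint_X.
  exact: pint_C.
- exact: monic1.
- exact: pint_1.
Qed.

Lemma lmul_ps1 (L : laurent K) g0 : (lmul_ps L g0).1 = L.1. Proof. by []. Qed.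
Lemma lmul_ps2 (L : laurent K) g0 : (lmul_ps L g0).2 = ps_mul L.2 g0. Proof. by []. Qed.
Lemma ps_laurent1 (f0 : nat -> K) : (ps_laurent f0).1 = 0%N. Proof. by []. Qed.
Lemma ps_laurent2 (f0 : nat -> K) : (ps_laurent f0).2 = f0. Proof. by []. Qed.

Lemma half_odd (k : nat) : (k.*2.+1)%:R / 2%:R = k%:R + 2%:R^-1 :> K.
Proof.
have h2 : (2%:R : K) != 0 by apply: (hchar 1).
by rewrite -addn1 natrD mulrDl -muln2 natrM mulfK // mul1r.
Qed.

Definition Tb (n : nat) : int := (trunc_log p (2 * n + g.*2.+1))%:Z.

Lemma Tb_mono m n : (m <= n)%N -> Tb m <= Tb n.
Proof.
by move=> h; rewrite /Tb lez_nat; apply: leq_trunc_log; rewrite leq_add2r leq_mul2l h orbT.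
Qed.

Lemma rhs_bound (x : option 'I_(g.*2.+1)) (Ls : option 'I_(g.*2.+1) -> laurent K) :
  (forall y (L : laurent K), exists B, forall j : nat, vge v (lcoef (expand_pr lam x y L) j) B) ->
  exists B, forall j : nat, vge v (\sum_y lcoef (expand_pr lam x y (Ls y)) j) B.
Proof.
move=> hex.
have [B hB] := @bound_list _ (index_enum (option 'I_(g.*2.+1)))
   (fun y B => forall j : nat, vge v (lcoef (expand_pr lam x y (Ls y)) j) B)
   (fun y B B' hyB hBB' j => vge_le (hyB j) hBB') (fun y => hex y (Ls y)).
exists B => j; apply: vge_sum => y _; apply: hB; exact: mem_index_enum.
Qed.

Lemma fin_conv (G1 : option 'I_(g.*2.+1) -> nat -> K) i :
 (forall j : int, lcoef (ps_laurent (dt (Some i) (G1 (Some i)))) j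
    + lcoef (lmul_ps (phi_h lam (Some i)) (G1 (Some i))) j
    = \sum_(y : option 'I_(g.*2.+1))
         lcoef (expand_pr lam (Some i) y (lmul_ps (phi_h lam y) (G1 y))) j) ->
 conv_open_disc v (G1 (Some i)).
Proof.
move=> heq.
set G := G1 (Some i).
set f := (phi_h lam (Some i)).2.
set RHS := fun n : nat => \sum_(y : option 'I_(g.*2.+1))
     lcoef (expand_pr lam (Some i) y (lmul_ps (phi_h lam y) (G1 y))) (Posz n).
set E := fun n => if n is n'.+1 then RHS n' else ps_mul f G 0.
have hG : forall n, 1 * (n%:R * G n) + ps_mul f G n = E n.
  case=> [|n]; first by rewrite mul0r mulr0 add0r.
  by rewrite mul1r /E /RHS -heq !lcoef_pos lmul_ps1 lmul_ps2 ps_laurent1 ps_laurent2 addn0 phi_fin1 addn1.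
have [B hB] : exists B, forall n, vge v (E n) B.
  have [B1 hB1] := rhs_bound (fun y => lmul_ps (phi_h lam y) (G1 y)) (rhs_fin i).
  exists (Num.min B1 (v (E 0%N))) => -[|n].
    by apply: vge_le (vge_v _) _; rewrite ge_min lexx orbT.
  by apply: vge_le (hB1 n) _; rewrite ge_min lexx.
have [u0 vu0] := Ui0 i.
have h2 := hchar 1.
apply: (@conv_of_bound _ B g.*2.+1).
apply: (@core 1 (2%:R^-1) (fun k => (Ui i)`_k) f G E B Tb) => //.
- exact: Ui_int.
- move=> n; rewrite (@eq_ps_mul _ (fun k => 2%:R * (Ui i)`_k) _
      (ps_mul (fun k => (Ui i + Dp (Ui i))`_k) (ps_inv (fun k => 2%:R * (Ui i)`_k)))) //;
    last by move=> k; rewrite /f phi_fin2.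
  by rewrite ps_mul_inv_cancel ?mulf_neq0 // coefD coef_Dp mulKf // mul1r.
- move=> n; rewrite mul1r -half_odd; case: (odd_val n) => //.
- move=> n; rewrite mul1r -half_odd; case: (odd_val n) => _ h.
  apply: le_trans h _; rewrite /Tb lez_nat; apply: leq_trunc_log.
  by rewrite -mul2n addnS ltnS leq_addr.
- exact: Tb_mono.
Qed.

Lemma Q_monic : Qpoly lam \is monic.
Proof. by apply: monic_prod => j _; exact: monicXsubC. Qed.

Lemma Q_size : size (Qpoly lam) = g.*2.+2.
Proof. by rewrite /Qpoly size_prod_XsubC [index_enum _]unlock -enumT -cardT card_ord. Qed.

Lemma Q_int : pint (Qpoly lam).
Proof. by apply: pint_prod => j _; apply: pint_sub; [exact: pint_X|exact: pint_C]. Qed.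

Lemma Q_lead : (Qpoly lam)`_(g.*2.+1) = 1.
Proof. by have := monicP Q_monic; rewrite lead_coefE Q_size. Qed.

Lemma hden_size : size (h_den lam) = g.*2.+2.
Proof. by rewrite /h_den size_Cmul ?Q_size //; exact: (hchar 1). Qed.

Lemma hnum_size : size (h_num lam) = g.*2.+1.
Proof.
have Q0 : Qpoly lam != 0 by rewrite -size_poly_gt0 Q_size.
apply/eqP; rewrite eqn_leq; apply/andP; split.
  by have := lt_size_deriv Q0; rewrite Q_size /h_num.
apply: coef_ne0_size; rewrite /h_num coef_deriv Q_lead.
by rewrite -mulr_natr mul1r hchar.
Qed.

Lemma rev_hden k : rev_coef (h_den lam) k = 2%:R * rev_coef (Qpoly lam) k.
Proof.
rewrite /rev_coef hden_size Q_size; case: ifP => _; last by rewrite mulr0.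
by rewrite /h_den coefCM.
Qed.

Lemma rev_hnum k : rev_coef (h_num lam) k =
  ((g.*2.+1)%:R - k%:R) * rev_coef (Qpoly lam) k.
Proof.
rewrite /rev_coef hnum_size Q_size /=.
case: (ltngtP k g.*2.+1) => hk.
- have hk' : (k <= g.*2)%N by rewrite -ltnS.
  rewrite hk' /h_num coef_deriv -subSn // -natrB ?mulr_natl //.
  exact: ltnW.
- by rewrite leqNgt (ltnW hk) mulr0.
- by rewrite hk leqNgt ltnSn subrr mul0r.
Qed.

Lemma phi_inf1 : (phi_h lam None).1 = g.*2.
Proof. by rewrite /phi_h /expand /expand_inf /= hnum_size. Qed.

Lemma phi_inf2 k : (phi_h lam None).2 k =
  if (g.*2.+1 <= k)%N then
    ps_mul (rev_coef (h_num lam)) (ps_inv (rev_coef (h_den lam))) (k - g.*2.+1) else 0.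
Proof. by rewrite /phi_h /expand /expand_inf /= hden_size. Qed.

Lemma lin1 (R : zmodType) (k g0 h : R) : -(k + g0 + (h + h)) + (g0 + h) = -(k + h).
Proof. by rewrite addrACA opprD addrNK. Qed.

Lemma inf_den n : -1 * n%:R + (g.*2.+1)%:R / 2%:R != 0 :> K /\
   v (-1 * n%:R + (g.*2.+1)%:R / 2%:R) <= Tb n.
Proof.
have h2 : (2%:R : K) != 0 by apply: (hchar 1).
have hh : (2%:R^-1 + 2%:R^-1 : K) = 1 by rewrite -mulr2n -(mulr_natr (2%:R^-1) 2) mulVf.
rewrite half_odd mulN1r.
case: (leqP n g) => hn.
  have e : - n%:R + (g%:R + 2%:R^-1) = (g - n)%:R + 2%:R^-1 :> K.
    by rewrite natrB // addrA; congr (_ + _); rewrite addrC.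
  rewrite e -half_odd; have [h1 h3] := odd_val (g - n).
  split => //; apply: le_trans h3 _; rewrite /Tb lez_nat; apply: leq_trunc_log.
  apply: leq_trans (leq_addl (2 * n) _).
  by rewrite ltnS leq_double leq_subr.
have e : - n%:R + (g%:R + 2%:R^-1) = - ((n - g.+1)%:R + 2%:R^-1) :> K.
  set k := (n - g.+1)%N.
  have hk : n = (k + g + 1)%N by rewrite /k addn1 -addnS subnK.
  rewrite {1}hk.
  have -> : ((k + g + 1)%:R : K) = k%:R + g%:R + (2%:R^-1 + 2%:R^-1) by rewrite hh !natrD.
  by rewrite lin1.
rewrite e; have [h1 h3] := odd_val (n - g.+1).
rewrite -half_odd oppr_eq0 vN; split => //; apply: le_trans h3 _.
rewrite /Tb lez_nat; apply: leq_trunc_log.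
rewrite addnS ltnS; apply: leq_trans (leq_addr (g.*2) _).
by rewrite mul2n leq_double leq_subr.
Qed.

Lemma inf_conv (G1 : option 'I_(g.*2.+1) -> nat -> K) :
 (forall j : int, lcoef (ps_laurent (dt (@None 'I_(g.*2.+1)) (G1 None))) j
    + lcoef (lmul_ps (phi_h lam None) (G1 None)) j
    = \sum_(y : option 'I_(g.*2.+1))
         lcoef (expand_pr lam None y (lmul_ps (phi_h lam y) (G1 y))) j) ->
 conv_open_disc v (G1 None).
Proof.
move=> heq.
set G := G1 None.
set f := ps_mul (rev_coef (h_num lam)) (ps_inv (rev_coef (h_den lam))).
set RHS := fun n : nat => \sum_(y : option 'I_(g.*2.+1))
     lcoef (expand_pr lam None y (lmul_ps (phi_h lam y) (G1 y))) (Posz n).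
set E := fun n => RHS n.+1.
have hG : forall n, -1 * (n%:R * G n) + ps_mul f G n = E n.
  move=> n; rewrite /E /RHS -heq !lcoef_pos lmul_ps1 lmul_ps2 ps_laurent1 ps_laurent2.
  rewrite addn0 phi_inf1 addSnnS mulN1r.
  rewrite (@shift_mul _ f) //.
  - by move=> k hk; rewrite phi_inf2 leqNgt hk.
  - by move=> k; rewrite phi_inf2 leq_addl addnK.
have [B hB] : exists B, forall n, vge v (E n) B.
  have [B1 hB1] := rhs_bound (fun y => lmul_ps (phi_h lam y) (G1 y)) rhs_inf.
  by exists B1 => n; apply: hB1.
have h2 := hchar 1.
have U0 : rev_coef (Qpoly lam) 0 = 1.
  by rewrite /rev_coef leq0n subn0 -lead_coefE (monicP Q_monic).
apply: (@conv_of_bound _ B g.*2.+1).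
apply: (@core (-1) ((g.*2.+1)%:R / 2%:R) (rev_coef (Qpoly lam)) f G E B Tb) => //.
- by rewrite U0 oner_neq0.
- by rewrite U0 v1.
- by move=> k; rewrite /rev_coef; case: ifP => _; [apply: Q_int|left].
- move=> n; rewrite (@eq_ps_mul _ (rev_coef (h_den lam)) _ f) //; last first.
    by move=> k; rewrite rev_hden.
  rewrite ps_mul_inv_cancel; last by rewrite rev_hden U0 mulr1.
  rewrite rev_hnum mulrBl mulN1r mulrA mulfVK //.
- by move=> n; case: (inf_den n).
- by move=> n; case: (inf_den n).
- exact: Tb_mono.
Qed.

Lemma G0_conv (x : option 'I_(g.*2.+1)) (G : nat -> K) :
  (forall n, dt x G n = 0) -> (x = None -> G 0%N = 0) -> conv_open_disc v G.
Proof.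
move=> h0 hinf.
have hz : forall n, (1 <= n)%N -> G n = 0.
  case: x h0 hinf => [i|] h0 hinf [|n] // _.
    have := h0 n; move/eqP; rewrite /= mulf_eq0.
    by case/orP => [h|/eqP //]; move: (hchar n); rewrite h.
  have := h0 n.+2; move/eqP; rewrite /= oppr_eq0 mulf_eq0.
  by case/orP => [h|/eqP //]; move: (hchar n); rewrite h.
by move=> c hc N; exists 1%N => l hl; left; apply: hz.
Qed.
End Val.

Theorem mainTheorem5 (p : nat) (K : fieldType) (v : K -> int)
  (HK : Witt_frac_field p v)
  (g : nat) (hg : (0 < g)%N)
  (lam : 'I_(g.*2.+1) -> K)
  (hlam_int : forall i, vge v (lam i) 0)
  (hlam_dist : forall i j, i != j -> lam i - lam j != 0 /\ v (lam i - lam j) = 0)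
  (G0 G1 : option 'I_(g.*2.+1) -> nat -> K)
  (hinf : G0 None 0%N = 0 /\ G1 None 0%N = 0)
  (heq0 : forall x n, dt x (G0 x) n = 0)
  (heq1 : forall x (j : int),
     lcoef (ps_laurent (dt x (G1 x))) j + lcoef (lmul_ps (phi_h lam x) (G1 x)) j
     = \sum_(y : option 'I_(g.*2.+1))
         lcoef (expand_pr lam x y (lmul_ps (phi_h lam y) (G1 y))) j) :
  forall x : option 'I_(g.*2.+1),
    conv_open_disc v (G0 x) /\ conv_open_disc v (G1 x).
Proof.
case: HK => [[hpr hp2] hchar [hmul [hult hvp]] _ _].
have hp : prime p /\ (2 < p)%N by [].
move=> x; split.
  apply: (@G0_conv K v hchar g x (G0 x)) => //.
  by move=> ->; case: hinf.
case: x => [i|].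
  exact: (fin_conv hp hchar hmul hult hvp hlam_int hlam_dist (heq1 (Some i))).
exact: (inf_conv hp hchar hmul hult hvp hlam_int (heq1 None)).
Qed.
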